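(* For $n\ge1$ and real $\theta$ with $1\le\theta\le n/2$, let $\mathcal V=\mathrm{span}\{|+\rangle^{\otimes n}\}$. Then $$\big\|\Pi_{\mathcal V^\perp}H^\theta_1|+\rangle^{\otimes n}\big\|^2=\langle+^{n}|(H^\theta_1)^2|+^{n}\rangle-\langle+^{n}|H^\theta_1|+^{n}\rangle^2\le2\theta^2e^{-(n/2-\theta)^2/n}.$$
   Context: On $n$ qubits with computational basis $|j\rangle$, $j\in\{0,\dots,2^n-1\}$: $h(j)$ is the Hamming weight of $j$, $h_\theta(j)=\min(\theta,h(j))$, and $H^\theta_1=\sum_j h_\theta(j)|j\rangle\langle j|$. $|+^n\rangle=|+\rangle^{\otimes n}$. *)

(* Defs.v *)
From Stdlib Require Import Reals Lra Lia.
Open Scope R_scope.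

(* Hamming weight of the n-bit string j: sum of the n low-order bits of j.
   For j < 2^n this is exactly the Hamming weight h(j). *)
Fixpoint hw (n j : nat) : nat :=
  match n with
  | O => O
  | S k => (Nat.modulo j 2 + hw k (Nat.div j 2))%nat
  end.

Fixpoint rsum (N : nat) (f : nat -> R) : R :=
  match N with
  | O => 0
  | S k => rsum k f + f k
  end.

(* state vectors on n qubits: amplitudes indexed by j in {0,...,2^n-1}
   (all vectors involved have real amplitudes) *)
Definition inner (n : nat) (u v : nat -> R) : R :=
  rsum (2 ^ n) (fun j => u j * v j).

Definition norm2 (n : nat) (v : nat -> R) : R := inner n v v.

Definition h_theta (theta : R) (n j : nat) : R := Rmin theta (INR (hw n j)).

(* H^theta_1 = sum_j h_theta(j) |j><j|, acting on a vector *)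
Definition H1 (theta : R) (n : nat) (v : nat -> R) : nat -> R :=
  fun j => h_theta theta n j * v j.

Definition plus_state (n : nat) : nat -> R := fun _ => / sqrt (2 ^ n).

Definition proj_perp (n : nat) (psi v : nat -> R) : nat -> R :=
  fun j => v j - (inner n psi v / inner n psi psi) * psi j.

(* Main.v *)
Require Import Defs.
From Stdlib Require Import Reals Lra Lia.
Open Scope R_scope.

Lemma exp_up x : 0 <= x <= 1/2 -> exp x <= 1 + x + x^2.
Proof.
  intros Hx.
  assert (H1 := exp_ineq1_le (- (x/4))).
  assert (Hp : 0 < 1 - x/4) by lra.
  assert (He : exp (x/4) <= / (1 - x/4)).
  { rewrite <- (Ropp_involutive (x/4)), exp_Ropp.
    apply Rinv_le_contravar; lra. }
  assert (E4 : exp x = exp (x/4) ^ 4).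
  { simpl. rewrite Rmult_1_r, <- !exp_plus. f_equal. lra. }
  rewrite E4.
  apply Rle_trans with ((/ (1 - x/4)) ^ 4).
  { apply pow_incr. split; [left; apply exp_pos | exact He]. }
  rewrite pow_inv.
  assert (Hq : 0 < (1 - x/4)^4) by (apply pow_lt; lra).
  apply (Rmult_le_reg_r ((1 - x/4)^4)); auto.
  rewrite Rinv_l by lra.
  nra.
Qed.

Lemma expm_up x : 0 <= x <= 1/2 -> exp (-x) <= 1 - x + x^2.
Proof.
  intros Hx.
  assert (H1 := exp_ineq1_le (x/2)).
  assert (E2 : exp x = exp (x/2) ^ 2).
  { simpl. rewrite Rmult_1_r, <- !exp_plus. f_equal. lra. }
  assert (Hl : (1 + x/2)^2 <= exp x).
  { rewrite E2. apply pow_incr. lra. }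
  rewrite exp_Ropp.
  assert (Hq : 0 < (1 + x/2)^2) by (apply pow_lt; lra).
  apply Rle_trans with (/ (1+x/2)^2).
  { apply Rinv_le_contravar; lra. }
  apply (Rmult_le_reg_r ((1 + x/2)^2)); auto.
  rewrite Rinv_l by lra.
  nra.
Qed.

Lemma cosh_bd x : 0 <= x <= 1/2 -> exp x + exp (-x) <= 2 * exp (x^2).
Proof.
  intros Hx. pose proof (exp_up x Hx). pose proof (expm_up x Hx).
  pose proof (exp_ineq1_le (x^2)). lra.
Qed.

Lemma rsum_ext N f g : (forall j, (j < N)%nat -> f j = g j) -> rsum N f = rsum N g.
Proof. induction N; simpl; intros H; auto. rewrite IHN by (intros; apply H; lia). rewrite H by lia. auto. Qed.

Lemma rsum_plus N f g : rsum N (fun j => f j + g j) = rsum N f + rsum N g.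
Proof. induction N; simpl; [lra|]. rewrite IHN; lra. Qed.

Lemma rsum_scal N a f : rsum N (fun j => a * f j) = a * rsum N f.
Proof. induction N; simpl; [lra|]. rewrite IHN; lra. Qed.

Lemma rsum_const N a : rsum N (fun _ => a) = INR N * a.
Proof. induction N; [simpl; lra|]. cbn [rsum]. rewrite IHN, S_INR; lra. Qed.

Lemma rsum_le N f g : (forall j, (j < N)%nat -> f j <= g j) -> rsum N f <= rsum N g.
Proof. induction N; simpl; intros H; [lra|]. pose proof (H N (Nat.lt_succ_diag_r N)).
  assert (rsum N f <= rsum N g) by (apply IHN; intros; apply H; lia). lra. Qed.

Lemma rsum_double N f : rsum (2*N) f = rsum N (fun k => f (2*k)%nat + f (2*k+1)%nat).
Proof.
  induction N; [simpl; lra|].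
  replace (2 * S N)%nat with (S (S (2*N))) by lia. cbn [rsum].
  rewrite IHN. replace (2*N+1)%nat with (S (2*N)) by lia. lra.
Qed.

Lemma hw_even n k : hw (S n) (2*k) = hw n k.
Proof. cbn [hw]. rewrite Nat.mul_comm, Nat.Div0.mod_mul, Nat.div_mul by lia. lia. Qed.

Lemma hw_odd n k : hw (S n) (2*k+1) = S (hw n k).
Proof. cbn [hw].
  replace ((2*k+1) mod 2)%nat with 1%nat.
  2:{ rewrite Nat.add_comm, Nat.mul_comm, Nat.Div0.mod_add. reflexivity. }
  replace ((2*k+1)/2)%nat with k. lia.
  rewrite Nat.add_comm, Nat.mul_comm, Nat.div_add by lia. reflexivity.
Qed.

Lemma sum_exp n l : rsum (2^n) (fun j => exp (- l * INR (hw n j))) = (1 + exp (-l))^n.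
Proof.
  induction n.
  - simpl. rewrite Rmult_0_r, exp_0. lra.
  - replace (2^S n)%nat with (2 * 2^n)%nat by (simpl; lia).
    rewrite rsum_double. cbn [pow]. rewrite <- IHn.
    rewrite <- rsum_scal. apply rsum_ext. intros j _.
    rewrite hw_even, hw_odd, S_INR.
    replace (- l * (INR (hw n j) + 1)) with (- l * INR (hw n j) + - l) by ring.
    rewrite exp_plus. ring.
Qed.

Lemma exp_pow a n : exp a ^ n = exp (INR n * a).
Proof. induction n. simpl. rewrite Rmult_0_l, exp_0; auto.
  rewrite S_INR. simpl pow. rewrite IHn, <- exp_plus. f_equal. ring. Qed.

Lemma pt_bd l th H : 0 <= l -> 0 <= th -> 0 <= H ->
  (Rmin th H - th)^2 <= th^2 * exp (l*th) * exp (- l * H).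
Proof.
  intros Hl Ht HH.
  assert (P1 := exp_pos (l*th)). assert (P2 := exp_pos (-l*H)).
  unfold Rmin; destruct (Rle_dec th H).
  - replace ((th - th)^2) with 0 by ring. apply Rmult_le_pos; [|lra].
    apply Rmult_le_pos; [nra|lra].
  - rewrite Rmult_assoc, <- exp_plus.
    assert (E := exp_ineq1_le (l*th + -l*H)).
    assert (0 <= l*(th-H)) by (apply Rmult_le_pos; lra).
    assert ((H-th)^2 <= th^2) by nra.
    assert (0 <= th^2) by nra. nra.
Qed.

Theorem mainTheorem13 (n : nat) (theta : R) :
  (1 <= n)%nat -> 1 <= theta -> theta <= INR n / 2 ->
  norm2 n (proj_perp n (plus_state n) (H1 theta n (plus_state n)))
    = inner n (plus_state n) (H1 theta n (H1 theta n (plus_state n)))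
      - (inner n (plus_state n) (H1 theta n (plus_state n))) ^ 2
  /\ inner n (plus_state n) (H1 theta n (H1 theta n (plus_state n)))
      - (inner n (plus_state n) (H1 theta n (plus_state n))) ^ 2
     <= 2 * theta ^ 2 * exp (- (INR n / 2 - theta) ^ 2 / INR n).
Proof.
  intros Hn Ht1 Ht2.
  set (c := / sqrt (2^n)).
  set (h := fun j => h_theta theta n j).
  set (S1 := rsum (2^n) h).
  set (S2 := rsum (2^n) (fun j => h j * h j)).
  assert (HN : INR (2^n) = 2^n).
  { rewrite pow_INR. replace (INR 2) with 2 by (simpl; ring). reflexivity. }
  assert (Hpow : 0 < 2^n) by (apply pow_lt; lra).
  assert (Hcc : c * c = / 2^n).
  { unfold c. rewrite <- Rinv_mult, sqrt_sqrt; lra. }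
  assert (ccN : c * c * INR (2^n) = 1).
  { rewrite Hcc, HN. field. lra. }
  assert (Ipp : inner n (plus_state n) (plus_state n) = 1).
  { unfold inner, plus_state. fold c. rewrite rsum_const. lra. }
  assert (Ip1 : inner n (plus_state n) (H1 theta n (plus_state n)) = c*c*S1).
  { unfold inner, H1, plus_state. fold c. unfold S1. rewrite <- rsum_scal.
    apply rsum_ext. intros; unfold h; ring. }
  assert (Ip2 : inner n (plus_state n) (H1 theta n (H1 theta n (plus_state n))) = c*c*S2).
  { unfold inner, H1, plus_state. fold c. unfold S2. rewrite <- rsum_scal.
    apply rsum_ext. intros; unfold h; ring. }
  rewrite Ip1, Ip2.
  split.
  - unfold norm2, proj_perp. rewrite Ipp, Ip1.
    unfold inner at 1. unfold H1, plus_state. fold c.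
    set (A := c*c*S1).
    transitivity (rsum (2^n) (fun j => (c*c) * (h j * h j) + ((-2*A*c*c) * h j + A*A*c*c))).
    { apply rsum_ext. intros. unfold h. field. }
    rewrite rsum_plus, rsum_plus, rsum_scal, rsum_scal, rsum_const. fold S1 S2.
    unfold A. 
    replace (INR (2 ^ n) * (c * c * S1 * (c * c * S1) * c * c)) with
      ((c * c * INR (2^n)) * (c * c * S1 * (c * c * S1))) by ring.
    rewrite ccN. ring.
  -
    set (t := INR n / 2 - theta).
    assert (Hn1 : 1 <= INR n) by (apply (le_INR 1); lia).
    set (x := t / INR n).
    assert (Hx : 0 <= x <= 1/2).
    { assert (Ex : x * INR n = t) by (unfold x; field; lra).
      assert (0 <= t <= INR n / 2) by (unfold t; lra).
      destruct (Rle_dec 0 x); destruct (Rle_dec x (1/2)); try (split; assumption).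
      - assert ((x - 1/2) * INR n > 0) by (apply Rmult_gt_0_compat; lra). lra.
      - assert ((0 - x) * INR n > 0) by (apply Rmult_gt_0_compat; lra). lra.
      - assert ((0 - x) * INR n > 0) by (apply Rmult_gt_0_compat; lra). lra. }
    set (l := 2 * x).
    assert (Step1 : c*c*S2 - (c*c*S1)^2 <= c*c * rsum (2^n) (fun j => (h j - theta)^2)).
    { replace (rsum (2^n) (fun j => (h j - theta)^2)) with
        (rsum (2^n) (fun j => 1 * (h j * h j) + ((-2*theta) * h j + theta^2))).
      2:{ apply rsum_ext. intros. ring. }
      rewrite rsum_plus, rsum_plus, rsum_scal, rsum_scal, rsum_const. fold S1 S2.
      assert (E : c * c * (1 * S2 + (-2 * theta * S1 + INR (2 ^ n) * theta ^ 2)) =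
                  c*c*S2 - 2*theta*(c*c*S1) + (c*c*INR(2^n)) * theta^2) by ring.
      rewrite E, ccN. pose proof (pow2_ge_0 (c*c*S1 - theta)). nra. }
    assert (Step2 : rsum (2^n) (fun j => (h j - theta)^2) <=
                    theta^2 * exp (l*theta) * (1 + exp (-l))^n).
    { rewrite <- sum_exp, <- rsum_scal. apply rsum_le. intros j _.
      unfold h, h_theta. apply pt_bd; [unfold l; lra | lra | apply pos_INR]. }
    assert (Step3 : (1 + exp (-l)) / 2 <= exp (x^2 - x)).
    { assert (E1 : 1 + exp (-l) = exp (-x) * (exp x + exp (-x))).
      { rewrite Rmult_plus_distr_l, <- !exp_plus. unfold l.
        replace (-x + x) with 0 by ring. rewrite exp_0. f_equal. f_equal. ring. }
      rewrite E1. unfold Rminus. rewrite Rplus_comm, exp_plus.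
      pose proof (cosh_bd x Hx). pose proof (exp_pos (-x)). nra. }
    assert (Step4 : ((1 + exp (-l)) / 2)^n <= exp (INR n * (x^2 - x))).
    { rewrite <- exp_pow. apply pow_incr. split; [|exact Step3].
      pose proof (exp_pos (-l)). lra. }
    assert (Eexp : l * theta + INR n * (x^2 - x) = - t ^ 2 / INR n).
    { unfold l, x, t. field. lra. }
    assert (Hc : 0 <= c * c) by nra.
    apply Rle_trans with (c*c * (theta^2 * exp (l*theta) * (1 + exp (-l))^n)).
    { apply Rle_trans with (1 := Step1). apply Rmult_le_compat_l; auto. }
    replace (c * c * (theta ^ 2 * exp (l * theta) * (1 + exp (- l)) ^ n)) with
      (theta^2 * exp (l*theta) * ((1 + exp (-l)) / 2)^n).
    2:{ rewrite Hcc. unfold Rdiv. rewrite Rpow_mult_distr, pow_inv. ring. }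
    rewrite <- Eexp, exp_plus.
    assert (0 <= theta^2 * exp (l*theta)) by (pose proof (exp_pos (l*theta)); nra).
    pose proof (exp_pos (INR n * (x ^ 2 - x))).
    apply Rle_trans with (theta^2 * exp (l*theta) * exp (INR n * (x^2 - x))).
    { apply Rmult_le_compat_l; auto. }
    nra.
Qed.
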